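(* Let $p$ be a prime, $g$ a generator of $U(\mathbb Z/p\mathbb Z)$, $n\ge 1$ an integer, $\varphi=\cos\frac{2\pi}{p-1}+i\sin\frac{2\pi}{p-1}$ and $\omega=\cos\frac{2\pi}{n}+i\sin\frac{2\pi}{n}$. For $1\le k\le n$ let $\beta_{1k}\in\mathbb R$ and $\beta_{2k}\ge 0$, with $\beta_{11}\ge\beta_{21}\ge 0$, and let $\mathcal B_k=\{\beta_{1k},\beta_{2k},\beta_{2k}\varphi,\dots,\beta_{2k}\varphi^{p-2}\}$ (with multiplicities), and $\mathcal B=\bigcup_{k=1}^n\mathcal B_k$. Let $S_1,\dots,S_n$ be real $g$-circulant matrices of order $p$ with spectrum $\Sigma(S_k)=\mathcal B_k$ for each $k$. Suppose that $\mathcal B_{n+2-k}=\overline{\mathcal B_k}$ for $2\le k\le n$, and that $$L_k=\frac1n\sum_{\ell=1}^n S_\ell\,\omega^{-(k-1)(\ell-1)}\ \ge 0\quad\text{(entrywise) for all }1\le k\le n.$$ Then $\mathcal B$ is the spectrum of a nonnegative $g$-circulant matrix by blocks (of order $pn$, with $p\times p$ blocks of order $n$).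
   Context: A $g$-circulant matrix of order $p$ is a matrix whose $(i,j)$ entry is $a_{j-(i-1)g}$ for its first row $(a_1,\dots,a_p)$ (subscripts modulo $p$). A block matrix $A=(A_{ij})_{1\le i,j\le p}$ with each block of size $n\times n$ is a $g$-circulant matrix by blocks if $A_{ij}=A_{i+1,j+g}$ for all $1\le i,j\le p$, subscripts taken modulo $p$; equivalently $A=g\text{-}circ(A_1,\dots,A_p)$ with block $(i,j)$ equal to $A_{j-(i-1)g}$. *)

(* Defs.v *)
From mathcomp Require Import all_boot all_algebra all_reals all_analysis.
From mathcomp Require Export complex.
Set Implicit Arguments. Unset Strict Implicit. Unset Printing Implicit Defensive.
Import GRing.Theory Num.Theory.
Local Open Scope ring_scope.
Local Open Scope complex_scope.

Definition is_generator_mod (p g : nat) : Prop :=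
  forall x : nat, (0 < x < p)%N -> exists k : nat, x = g ^ k %[mod p].

(* A (p x p) matrix is g-circulant: A_{ij} = A_{i+1, j+g} (indices mod p),
   equivalently A_{ij} = a_{j-(i-1)g} with (a_1,...,a_p) its first row. *)
Definition is_gcirc (R : Type) (p g : nat) (A : 'M[R]_p) : Prop :=
  forall i j i' j' : 'I_p,
    (i' = ((i + 1) %% p)%N :> nat) -> (j' = ((j + g) %% p)%N :> nat) -> A i j = A i' j'.

(* A (p*n x p*n) matrix, viewed as a p x p block matrix with n x n blocks
   (block (i,j), entry (a,b) is A (i*n+a) (j*n+b) = A (mxvec_index i a) (mxvec_index j b)),
   is g-circulant by blocks: A_{ij} = A_{i+1, j+g} (block indices mod p). *)
Definition is_gcirc_blocks (R : Type) (p n g : nat) (A : 'M[R]_(p * n)) : Prop :=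
  forall (i j i' j' : 'I_p) (a b : 'I_n),
    (i' = ((i + 1) %% p)%N :> nat) -> (j' = ((j + g) %% p)%N :> nat) ->
    A (mxvec_index i a) (mxvec_index j b) = A (mxvec_index i' a) (mxvec_index j' b).

Definition spectrum_is (R : realType) (m : nat) (A : 'M[R]_m) (s : seq R[i]) : Prop :=
  char_poly (map_mx (fun x : R => x%:C) A) = \prod_(z <- s) ('X - z%:P).

Definition cis (R : realType) (t : R) : R[i] := (cos t) +i* (sin t).

Definition Bset (R : realType) (p : nat) (phi : R[i]) (b1 b2 : R) : seq R[i] :=
  b1%:C :: [seq b2%:C * phi ^+ j | j <- iota 0 p.-1].

Arguments is_gcirc {R} p g A.
Arguments is_gcirc_blocks {R} p n g A.

(* Main.v *)
Require Import Defs.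
From mathcomp Require Import all_boot all_algebra all_reals all_analysis.
From mathcomp Require Import ring lra.
From mathcomp Require Import order fingroup perm.
From mathcomp Require Import zify.
Import Order.TTheory GRing.Theory Num.Theory.
Local Open Scope ring_scope.
Local Open Scope complex_scope.
Local Open Scope complex_scope.

Lemma cisD (R : realType) (a b : R) : cis a * cis b = cis (a + b).
Proof.
rewrite /cis cosD sinD; apply/eqP; rewrite eq_complex /=; apply/andP; split; apply/eqP.
  by rewrite mulrC.
by rewrite addrC [sin a * _]mulrC.
Qed.

Lemma cisX (R : realType) (t : R) j : cis t ^+ j = cis (j%:R * t).
Proof.
elim: j => [|j IH]; first by rewrite expr0 mul0r /cis cos0 sin0.
by rewrite exprS IH cisD -[j.+1]addn1 natrD mulrDl mul1r addrC.
Qed.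

Lemma cos_neq1 (R : realType) (x : R) : 0 < x < pi *+ 2 -> cos x != 1.
Proof.
move=> /andP[x0 x2]; apply/eqP => hc.
have hs : 0 < sin (x / 2).
  apply: sin_gt0_pi; apply/andP; split; first by rewrite divr_gt0.
  by rewrite ltr_pdivrMr // mulr_natr.
have : cos ((x / 2) *+ 2) = 1 by rewrite -mulr_natr divfK ?pnatr_eq0.
rewrite cos_mulr2n => h.
have hc2 : cos (x / 2) ^+ 2 = 1.
  by move: h; rewrite -mulr_natr; lra.
move: (sin2cos2 (x / 2)); rewrite hc2 subrr => /eqP; rewrite expf_eq0 /= => /eqP h0.
by move: hs; rewrite h0 ltxx.
Qed.

Lemma omega_prim (R : realType) n : (0 < n)%N -> n.-primitive_root (cis ((2 * pi) / n%:R) : R[i]).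
Proof.
move=> n0; apply/andP; split => //; apply/forallP => i; rewrite unity_rootE cisX.
have nz : (n%:R : R) != 0 by rewrite pnatr_eq0 -lt0n.
case: (i.+1 =P n) => [hi|hi].
  rewrite hi eqb_id; rewrite mulrC divfK // /cis.
  have -> : (2 * pi : R) = pi *+ 2 by rewrite mulr_natl.
  rewrite cos2pi sin2pi.
  by rewrite eqxx.
rewrite eqbF_neg; apply/eqP => h; move: h => [] hc _; move: hc; apply/eqP; apply: cos_neq1; apply/andP; split.
  by rewrite mulr_gt0 ?ltr0n // divr_gt0 ?ltr0n ?mulr_gt0 ?pi_gt0.
rewrite mulrA ltr_pdivrMr ?ltr0n //.
have hlt : (i.+1%:R : R) < n%:R.
  rewrite ltr_nat ltn_neqAle ltn_ord andbT; exact/eqP.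
have hp := pi_gt0 R.
rewrite -mulr_natr; nra.
Qed.

Lemma orth (K : fieldType) n (w : K) : n.-primitive_root w -> forall m l, (m < n)%N -> (l < n)%N ->
  \sum_(b < n) w ^+ (b * m) * (w ^+ (b * l))^-1 = if m == l then n%:R else 0.
Proof.
move=> pw m l mn ln.
have n0 := prim_order_gt0 pw.
have w0 : w != 0 by rewrite (prim_root_eq0 pw) -lt0n.
set z := w ^+ m / w ^+ l.
have ez : forall b : 'I_n, w ^+ (b * m) * (w ^+ (b * l))^-1 = z ^+ b.
  by move=> b; rewrite /z exprMn exprVn -!exprM mulnC [(l * b)%N]mulnC.
under eq_bigr do rewrite ez.
case: (m =P l) => [ml|hml].
  rewrite /z ml divff ?expf_neq0 //.
  under eq_bigr do rewrite expr1n.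
  by rewrite sumr_const card_ord.
have z1 : z != 1.
  rewrite /z; apply/eqP => h; apply: hml.
  have : w ^+ m == w ^+ l by rewrite -[w ^+ m](divfK (expf_neq0 l w0)) h mul1r.
  by rewrite (eq_prim_root_expr pw) !modn_small // => /eqP.
have zn : z ^+ n = 1.
  by rewrite /z exprMn exprVn -!exprM mulnC [(l * n)%N]mulnC !exprM (prim_expr_order pw) !expr1n invr1 mulr1.
have := subrX1 z n; rewrite zn subrr => /esym/eqP; rewrite mulf_eq0 subr_eq0 (negbTE z1) /=.
by move/eqP.
Qed.

Definition blk {K : pzRingType} N p (f : nat -> nat -> nat -> K) : 'M[K]_N :=
  \matrix_(x, y) (if (x %/ p == y %/ p)%N then f (x %/ p)%N (x %% p)%N (y %% p)%N else 0).

Lemma det_blk (K : comNzRingType) n p N (f : nat -> nat -> nat -> K) : N = (n * p)%N ->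
  \det (blk N p f) = \prod_(a < n) \det (\matrix_(i, j < p) f a i j).
Proof.
elim: n N f => [|n IH] N f ->.
  by rewrite big_ord0 mul0n det_mx00.
rewrite mulSn.
have -> : blk (p + n * p) p f =
   block_mx (\matrix_(i, j < p) f 0%N i j) 0 0 (blk (n * p) p (fun a => f a.+1)).
  apply/matrixP => x y.
  have p0 : (0 < p)%N.
    move: (ltn_ord x); move: (nat_of_ord x) => k; case: (posnP p) => [->|//]; by rewrite muln0.
  have dv : forall k : nat, ((p + k) %/ p = (k %/ p).+1)%N.
    by move=> k; rewrite divnDl ?dvdnn // divnn p0 add1n.
  rewrite -[x](splitK) -[y](splitK).
  case: (split x) => i; case: (split y) => j;
    rewrite ?block_mxEul ?block_mxEur ?block_mxEdl ?block_mxEdr !mxE /=.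
  - by rewrite !divn_small // eqxx !modn_small.
  - by rewrite divn_small // dv.
  - rewrite (dv i) (divn_small (ltn_ord j)). done.
  - by rewrite (dv i) (dv j) eqSS !modnDl.
by rewrite det_ublock (IH (n * p)%N) // big_ord_recl.
Qed.

Lemma det_reindex (K : comNzRingType) N (B : 'M[K]_N) (s : 'I_N -> 'I_N) : injective s ->
  \det (\matrix_(x, y) B (s x) (s y)) = \det B.
Proof.
move=> si; pose sp := perm si.
have -> : \matrix_(x, y) B (s x) (s y) = row_perm sp (col_perm sp B).
  by apply/matrixP => x y; rewrite !mxE !permE.
rewrite row_permE col_permE !det_mulmx !det_perm odd_permV.
by rewrite mulrCA -signr_addb addbb expr0 mulr1. Qed.

Definition mxp {p n} (x : 'I_(p * n)) : 'I_p * 'I_n :=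
  enum_val (cast_ord (esym (mxvec_cast p n)) x).

Lemma mxpK p n (i : 'I_p) (a : 'I_n) : mxp (mxvec_index i a) = (i, a).
Proof. by rewrite /mxp /mxvec_index cast_ordK enum_rankK. Qed.

Lemma mxvec_eq p n (i j : 'I_p) (a b : 'I_n) :
  (mxvec_index i a == mxvec_index j b) = (i == j) && (a == b).
Proof.
apply/eqP/andP => [h|[/eqP-> /eqP->]//].
by have := congr1 (@mxp p n) h; rewrite !mxpK => -[-> ->].
Qed.

Lemma sum_mxvec (V : nmodType) p n (F : 'I_(p * n) -> V) :
  \sum_x F x = \sum_(i < p) \sum_(a < n) F (mxvec_index i a).
Proof.
rewrite pair_big /=.
rewrite (reindex (fun ia : 'I_p * 'I_n => mxvec_index ia.1 ia.2)) //.
apply: onW_bij; exists (@mxp p n) => [[i a]|x] /=; first by rewrite mxpK.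
by case/mxvec_indexP: x => i a; rewrite mxpK.
Qed.

Lemma idx_lt p n a i : (a < n)%N -> (i < p)%N -> (a * p + i < p * n)%N.
Proof. move=> an ip; nia. Qed.

Theorem mainTheorem11 (R : realType) (p g n : nat) (beta1 beta2 : 'I_n -> R)
    (S : 'I_n -> 'M[R]_p) :
  prime p -> is_generator_mod p g -> (0 < n)%N ->
  let phi : R[i] := cis ((2 * pi) / (p.-1)%:R) in
  let omega : R[i] := cis ((2 * pi) / n%:R) in
  let B : 'I_n -> seq R[i] := fun k => Bset p phi (beta1 k) (beta2 k) in
  (forall k, 0 <= beta2 k) ->
  (forall k0 : 'I_n, val k0 = 0%N -> beta2 k0 <= beta1 k0) ->
  (forall k, is_gcirc p g (S k)) ->
  (forall k, spectrum_is (S k) (B k)) ->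
  (forall k k' : 'I_n, (1 <= k)%N -> val k' = (n - k)%N ->
      perm_eq (B k') (map Num.conj (B k))) ->
  (forall (k : 'I_n) (i j : 'I_p),
      0 <= n%:R^-1 * \sum_(l < n) ((S l i j)%:C * omega ^- (k * l))) ->
  exists A : 'M[R]_(p * n),
    (forall r c, 0 <= A r c) /\ is_gcirc_blocks p n g A /\
    spectrum_is A (flatten [seq B k | k <- enum 'I_n]).
Proof.
move=> pr _ n0 phi omega B _ _ hgc hsp _ hL.
have pw : n.-primitive_root omega by exact: omega_prim.
have p0 : (0 < p)%N by exact: prime_gt0.
set w := omega in hL pw.
pose Lf (k : nat) (i j : 'I_p) : R[i] :=
  n%:R^-1 * \sum_(l < n) ((S l i j)%:C * w ^- (k * l)).
have Lmod : forall k i j, Lf k i j = Lf (k %% n)%N i j.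
  move=> k i j; rewrite /Lf; congr (_ * _); apply: eq_bigr => l _.
  by rewrite -[in RHS](prim_expr_mod pw) modnMml (prim_expr_mod pw).
have Lge0 : forall k i j, 0 <= Lf k i j.
  by move=> k i j; rewrite Lmod; exact: (hL (Ordinal (ltn_pmod k n0)) i j).
have Lreal : forall k i j, (complex.Re (Lf k i j))%:C = Lf k i j.
  move=> k i j; exact: (@RRe_real R (Lf k i j) (ger0_real (Lge0 k i j))).
pose kk (x y : 'I_(p * n)) : nat := ((mxp y).2 + (mxp x).2 * (n - 1))%N.
pose A : 'M[R]_(p * n) := \matrix_(x, y) complex.Re (Lf (kk x y) (mxp x).1 (mxp y).1).
exists A; split; [|split].
- move=> r c; rewrite mxE; have := Lge0 (kk r c) (mxp r).1 (mxp c).1.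
  by rewrite lecE => /andP[_ h]; exact: h.
- move=> i j i' j' a b hi hj; rewrite !mxE !mxpK /=.
  congr (complex.Re (_ * _)); apply: eq_bigr => l _.
  by rewrite /kk !mxpK /= (hgc l i j i' j' hi hj).
rewrite /spectrum_is.
set C := map_mx _ A.
have CE : forall i a j b, C (mxvec_index i a) (mxvec_index j b) = Lf (b + a * (n - 1))%N i j.
  by move=> i a j b; rewrite !mxE /kk !mxpK /= Lreal.
pose W : 'M[R[i]]_(p * n) := \matrix_(x, y)
  (if (mxp x).1 == (mxp y).1 then w ^+ ((mxp x).2 * (mxp y).2) else 0).
pose W' : 'M[R[i]]_(p * n) := \matrix_(x, y)
  (if (mxp x).1 == (mxp y).1 then n%:R^-1 * (w ^+ ((mxp x).2 * (mxp y).2))^-1 else 0).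
pose sg (x : 'I_(p * n)) : 'I_(p * n) :=
  Ordinal (@idx_lt p n _ _ (ltn_ord (mxp x).2) (ltn_ord (mxp x).1)).
have sgE : forall i a, sg (mxvec_index i a) = (a * p + i)%N :> nat.
  by move=> i a; rewrite /= mxpK.
have dv : forall (a : nat) (i : 'I_p), ((a * p + i) %/ p = a)%N.
  by move=> a i; rewrite divnMDl // divn_small // addn0.
have md : forall (a : nat) (i : 'I_p), ((a * p + i) %% p = i)%N.
  by move=> a i; rewrite modnMDl modn_small.
have sginj : injective sg.
  move=> x y; case/mxvec_indexP: x => i a; case/mxvec_indexP: y => j b.
  move=> /(congr1 val) /=; rewrite !mxpK /= => h.
  have ha : a = b by apply: ord_inj; rewrite -(dv a i) h dv.
  have hi : i = j by apply: ord_inj; rewrite -(md a i) h md.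
  by rewrite ha hi.
pose Sc (l : 'I_n) := map_mx (fun x : R => x%:C) (S l).
pose ordn (a : nat) : 'I_n := Ordinal (ltn_pmod a n0).
pose ordp (a : nat) : 'I_p := Ordinal (ltn_pmod a p0).
pose f (a i j : nat) : R[i] := Sc (ordn a) (ordp i) (ordp j).
pose D : 'M[R[i]]_(p * n) := \matrix_(x, y) (blk (p * n) p f) (sg x) (sg y).
have ordnE : forall a : 'I_n, ordn a = a by move=> a; apply: val_inj; rewrite /= modn_small.
have ordpE : forall a : 'I_p, ordp a = a by move=> a; apply: val_inj; rewrite /= modn_small.
have DE : forall i a j b, D (mxvec_index i a) (mxvec_index j b) = if a == b then Sc a i j else 0.
  move=> i a j b; rewrite !mxE !sgE !dv !md.
  case: (a =P b) => [->|hab]; first by rewrite eqxx /f ordnE !ordpE mxE.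
  by case: eqP => // /val_inj.
have WW' : W *m W' = 1%:M.
  apply/matrixP => x y; case/mxvec_indexP: x => i a; case/mxvec_indexP: y => j b.
  rewrite !mxE sum_mxvec (bigD1 i) //= [X in _ + X]big1 ?addr0; last first.
    move=> i' /negbTE hi'; apply: big1 => m _.
    by rewrite !mxE !mxpK /= eq_sym hi' mul0r.

  rewrite mxvec_eq.
  under eq_bigr do rewrite !mxE !mxpK /= eqxx.
  case: (i =P j) => [_|hij] /=.
  - under eq_bigr do rewrite mulrCA [(a * _)%N]mulnC.
    rewrite -mulr_sumr (orth _ _ _ pw) //.
    case: (a =P b) => [->|hab]; first by rewrite eqxx mulVf // pnatr_eq0 -lt0n.
    by case: eqP => [/val_inj|]; rewrite ?mulr0.
  - under eq_bigr do rewrite mulr0.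
    by rewrite big1.
have w0 : w != 0 by rewrite (prim_root_eq0 pw) -lt0n.
have winv : forall a b l : nat,
    (w ^+ ((b + a * (n - 1)) * l))^-1 = (w ^+ (b * l))^-1 * w ^+ (a * l).
  move=> a b l; rewrite mulnDl exprD invfM; congr (_ * _).
  have h : w ^+ (a * (n - 1) * l) * w ^+ (a * l) = 1.
    rewrite -exprD.
    have -> : (a * (n - 1) * l + a * l = (a * l) * n)%N.
      by rewrite -mulnDl -[in X in (_ + X)%N](muln1 a) -mulnDr subnK // mulnAC.
    by rewrite exprM exprAC (prim_expr_order pw) expr1n.
  by rewrite -[LHS]mulr1 -h mulKf // expf_neq0.
have CW : C *m W = W *m D.
  apply/matrixP => x y; case/mxvec_indexP: x => i a; case/mxvec_indexP: y => j m.
  rewrite !mxE !sum_mxvec (bigD1 j) //= [X in _ + X]big1 ?addr0; last first.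
    move=> i' /negbTE hi'; apply: big1 => b _.
    by rewrite [W _ _]mxE !mxpK /= hi' mulr0.
  rewrite [in RHS](bigD1 i) //= [X in _ + X]big1 ?addr0; last first.
    move=> i' /negbTE hi'; apply: big1 => b _.
    by rewrite [W _ _]mxE !mxpK /= eq_sym hi' mul0r.
  rewrite [in RHS](bigD1 m) //= [X in _ + X]big1 ?addr0; last first.
    move=> b /negbTE hb; rewrite DE hb mulr0 //.
  rewrite DE eqxx [W _ _]mxE !mxpK /= eqxx.
  transitivity (\sum_(b < n) \sum_(l < n) n%:R^-1 * (S l i j)%:C * w ^+ (a * l) *
      (w ^+ (b * m) * (w ^+ (b * l))^-1)).
    apply: eq_bigr => b _; rewrite CE [W _ _]mxE !mxpK /= eqxx /Lf mulr_sumr mulr_suml.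
    apply: eq_bigr => l _; rewrite winv; ring.
  rewrite exchange_big /=.
  under eq_bigr do rewrite -mulr_sumr (orth _ _ _ pw) //.
  rewrite (bigD1 m) //= big1 ?addr0; last first.
    by move=> l /negbTE hl; rewrite eq_sym (introF eqP) ?mulr0 // => /val_inj /eqP; rewrite hl.
  rewrite eqxx mxE.
  have nz : (n%:R : R[i]) != 0 by rewrite pnatr_eq0 -lt0n.
  by field.
have cpCD : char_poly C = char_poly D.
  have detW : \det W != 0.
    apply/eqP => h; have := congr1 determinant WW'.
    by rewrite det_mulmx h mul0r det1 => /eqP; rewrite eq_sym oner_eq0.
  pose Wp := map_mx (@polyC _) W.
  have e : char_poly_mx C *m Wp = Wp *m char_poly_mx D.
    by rewrite /char_poly_mx mulmxBl mulmxBr -!map_mxM CW scalar_mxC.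
  have := congr1 determinant e; rewrite !det_mulmx det_map_mx /= => h.
  apply: (@mulIf _ (\det W)%:P); first by rewrite polyC_eq0.
  by rewrite /char_poly h mulrC.
have cpD : char_poly D = \prod_(a < n) char_poly (Sc a).
  pose f' (a i j : nat) : {poly R[i]} := 'X *+ (i == j)%N - (f a i j)%:P.
  have e1 : char_poly_mx D = \matrix_(x, y) (char_poly_mx (blk (p * n) p f)) (sg x) (sg y).
    by apply/matrixP => x y; rewrite /char_poly_mx !mxE (inj_eq sginj).
  have e2 : char_poly_mx (blk (p * n) p f) = blk (p * n) p f'.
    apply/matrixP => x y; rewrite /char_poly_mx !mxE.
    case: (x %/ p =P y %/ p)%N => hxy.
    - have -> : (x == y) = (x %% p == y %% p)%N.
        apply/eqP/eqP => [->//|h]; apply: ord_inj.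
        by rewrite (divn_eq x p) (divn_eq y p) hxy h.
      by rewrite /f'.
    - have -> : (x == y) = false by apply/eqP => h; apply: hxy; rewrite h.
      by rewrite mulr0n sub0r oppr0.
  rewrite /char_poly e1.
  rewrite (@det_reindex _ _ _ sg sginj).
  rewrite e2.
  rewrite (@det_blk _ n p); last exact: mulnC.
  apply: eq_bigr => a _; congr (\det _); apply/matrixP => i j.
  by rewrite /f' /f ordnE !mxE !ordpE.
rewrite cpCD cpD big_flatten big_map /= big_enum /=.
by apply: eq_bigr => a _; rewrite hsp.
Qed.
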